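(* Let $k$ be a field of characteristic different from $2$ containing a square root of $-1$. Let $G=\mathrm{SL}_3\rtimes\mu_2$ with $-1\in\mu_2$ acting by $A\mapsto(A^{\mathrm{T}})^{-1}$, acting on $V\oplus V$ ($V=k^3$) by $A\cdot(v,w)=(Av,(A^{\mathrm{T}})^{-1}w)$ and $(\mathrm{id},-1)\cdot(v,w)=(w,v)$; let $\mu_2$ act on $V\oplus V$ by scaling, and let $H\subset G\times\mu_2$ be the stabilizer of $(e_1,e_1)$. Then $H$ is isomorphic to the semidirect product $\mathrm{SL}_2\rtimes(\mu_2\times\mu_2)$, where the homomorphism $\mu_2\times\mu_2\to\mathrm{Aut}(\mathrm{SL}_2)$ sends $(-1,1)$ to $A\mapsto(A^{\mathrm{T}})^{-1}$ and $(1,-1)$ to the automorphism $\begin{pmatrix}a&b\\c&d\end{pmatrix}\mapsto\begin{pmatrix}a&-b\\-c&d\end{pmatrix}$.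
   Context: $e_1=(1,0,0)\in k^3$. *)

(* Defs.v *)
From HB Require Import structures.
From mathcomp Require Import all_boot all_order all_algebra.
Set Implicit Arguments. Unset Strict Implicit. Unset Printing Implicit Defensive.
Import Order.TTheory GRing.Theory Num.Theory.
Local Open Scope ring_scope.

(* Group schemes over a field k are described by their functors of points on
   commutative k-algebras R (objects of comAlgType k). *)

Section Defs.
Variable k : fieldType.
Variable R : comAlgType k.

Definition inmu2 (e : R) : bool := e ^+ 2 == 1.

Definition inSL n (A : 'M[R]_n) : bool := \det A == 1.

(* (A^T)^{-1} for A of determinant 1 : inverse of A is its adjugate. *)
Definition tinv n (A : 'M[R]_n) : 'M[R]_n := (\adj A)^T.

(* for e in mu_2(R) (2 invertible in k): the idempotents (1+e)/2, (1-e)/2 *)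
Definition pplus (e : R) : R := (2%:R : k)^-1 *: (1 + e).
Definition pminus (e : R) : R := (2%:R : k)^-1 *: (1 - e).

(* action of e in mu_2 on SL_3 (or SL_2) : -1 acts by A |-> (A^T)^{-1} *)
Definition twist n (e : R) (A : 'M[R]_n) : 'M[R]_n :=
  pplus e *: A + pminus e *: tinv A.

Definition flip (B : 'M[R]_2) : 'M[R]_2 :=
  \matrix_(i, j) (if i == j then B i j else - B i j).
Definition twist2 (f : R) (B : 'M[R]_2) : 'M[R]_2 :=
  pplus f *: B + pminus f *: flip B.

Definition inGm (x : 'M[R]_3 * R * R) : bool :=
  [&& inSL x.1.1, inmu2 x.1.2 & inmu2 x.2].

Definition mulGm (x y : 'M[R]_3 * R * R) : 'M[R]_3 * R * R :=
  (x.1.1 *m twist x.1.2 y.1.1, x.1.2 * y.1.2, x.2 * y.2).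

Definition swapv (e : R) (p : 'cV[R]_3 * 'cV[R]_3) : 'cV[R]_3 * 'cV[R]_3 :=
  (pplus e *: p.1 + pminus e *: p.2, pminus e *: p.1 + pplus e *: p.2).

Definition actGm (x : 'M[R]_3 * R * R) (p : 'cV[R]_3 * 'cV[R]_3)
  : 'cV[R]_3 * 'cV[R]_3 :=
  let q := swapv x.1.2 p in
  (x.2 *: (x.1.1 *m q.1), x.2 *: (tinv x.1.1 *m q.2)).

Definition e1 : 'cV[R]_3 := \col_i (if i == 0 then 1 else 0).

Definition inH (x : 'M[R]_3 * R * R) : bool :=
  inGm x && (actGm x (e1, e1) == (e1, e1)).

Definition inK (x : 'M[R]_2 * R * R) : bool :=
  [&& inSL x.1.1, inmu2 x.1.2 & inmu2 x.2].

Definition mulK (x y : 'M[R]_2 * R * R) : 'M[R]_2 * R * R :=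
  (x.1.1 *m twist x.1.2 (twist2 x.2 y.1.1), x.1.2 * y.1.2, x.2 * y.2).

End Defs.

Definition mapT (k : fieldType) (R S : comAlgType k) (f : {lrmorphism R -> S}) n
  (x : 'M[R]_n * R * R) : 'M[S]_n * S * S :=
  (map_mx f x.1.1, f x.1.2, f x.2).

(* Main.v *)
Require Import Defs.
From HB Require Import structures.
From mathcomp Require Import all_boot all_order all_algebra.
From mathcomp Require Import ring.
Import GRing.Theory.
Local Open Scope ring_scope.
Set Implicit Arguments. Unset Strict Implicit.

Section Aux.
Variable k : fieldType.
Hypothesis hchar : (2%:R : k) != 0.
Variable R : comAlgType k.

Lemma half2 (v : R) : (2%:R : k)^-1 *: (v *+ 2) = v.
Proof. by rewrite -scalerMnr scalerMnl -mulr_natr mulVf // scale1r. Qed.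

Lemma ppm1 (e : R) : pplus e + pminus e = 1.
Proof. by rewrite /pplus /pminus -scalerDr addrACA subrr addr0 half2. Qed.

Lemma ppml (e : R) : pplus e - pminus e = e.
Proof.
by rewrite /pplus /pminus -scalerBr opprD opprK addrACA subrr add0r half2.
Qed.

Lemma tinv_uniq n (A M : 'M[R]_n) : \det A = 1 -> A^T *m M = 1 -> tinv A = M.
Proof.
move=> dA AM; rewrite /tinv.
transitivity ((\adj A)^T *m (A^T *m M)); first by rewrite AM mulmx1.
by rewrite mulmxA -trmx_mul mul_mx_adj dA tr_scalar_mx mul1mx.
Qed.

Lemma tinvP n (A : 'M[R]_n) : \det A = 1 -> A^T *m tinv A = 1.
Proof. by move=> dA; rewrite /tinv -trmx_mul mul_adj_mx dA tr_scalar_mx. Qed.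


Definition Dl (l : R) : 'M[R]_2 := diag_mx (\row_(i < 2) (if i == 0 then 1 else l)).

Ltac ent2 := apply/matrixP; move=> [[|[|//]] ?] [[|[|//]] ?]; rewrite !mxE /=.

Lemma trDl l : (Dl l)^T = Dl l.
Proof. exact: tr_diag_mx. Qed.

Lemma DlK l : l ^+ 2 = 1 -> Dl l *m Dl l = 1.
Proof. move=> hl; rewrite mulmx_diag; ent2; rewrite ?mxE /= ?mulr1 -?expr2 ?hl //. Qed.

Lemma detDl l : \det (Dl l) = l.
Proof. by rewrite det_diag big_ord_recl big_ord1 !mxE /= mul1r. Qed.

Lemma DlM l1 l2 : l2 ^+ 2 = 1 -> Dl l2 *m Dl (l1 * l2) = Dl l1.
Proof.
move=> hl; rewrite mulmx_diag; ent2; rewrite ?mxE /= ?mulr1 //.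
by rewrite mulrC -mulrA [_ * l2]mulrC -expr2 hl mulr1.
Qed.

Lemma twist2E l (B : 'M[R]_2) : l ^+ 2 = 1 -> twist2 l B = Dl l *m B *m Dl l.
Proof.
move=> hl; rewrite mul_diag_mx mul_mx_diag /twist2 /flip; ent2;
  rewrite ?mulrN -?mulrDl -?mulrBl ?ppm1 ?ppml ?mul1r ?mulr1 //.
- by rewrite mulrC.
- by rewrite mulrC mulrA -expr2 hl mul1r.
Qed.

Definition blk (l : R) (B : 'M[R]_2) : 'M[R]_3 := block_mx (l%:M : 'M_1) 0 0 B.

Lemma det_blk l B : \det (blk l B) = l * \det B.
Proof. by rewrite /blk (det_ublock (l%:M : 'M_1)) det_scalar1. Qed.

Lemma mul_blk a b M N : blk a M *m blk b N = blk (a * b) (M *m N).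
Proof.
by rewrite /blk (mulmx_block (a%:M : 'M_1) 0 0 M (b%:M : 'M_1) 0 0 N) !mul0mx !mulmx0 !addr0 !add0r -scalar_mxM.
Qed.

Lemma tr_blk l M : (blk l M)^T = blk l M^T.
Proof. by rewrite /blk (tr_block_mx (l%:M : 'M_1)) tr_scalar_mx !trmx0. Qed.

Lemma scale_blk a l M : a *: blk l M = blk (a * l) (a *: M).
Proof. by rewrite /blk (scale_block_mx a (l%:M : 'M_1)) scale_scalar_mx !scaler0. Qed.

Lemma add_blk a b M N : blk a M + blk b N = blk (a + b) (M + N).
Proof. by rewrite /blk (add_block_mx (a%:M : 'M_1)) !addr0 -(raddfD (@scalar_mx _ 1)). Qed.

Lemma blk_inj a b M N : blk a M = blk b N -> a = b /\ M = N.
Proof.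
rewrite /blk => /(@eq_block_mx _ 1 2 1 2) [h _ _ ->]; split=> //.
by move/matrixP: h => /(_ 0 0); rewrite !mxE.
Qed.

Lemma blk1 : blk 1 1 = 1.
Proof. by rewrite /blk; symmetry; exact: (@scalar_mx_block _ 1 2 1). Qed.

Lemma tinv_blk l B : \det B = 1 -> l ^+ 2 = 1 ->
  tinv (blk l (B *m Dl l)) = blk l (tinv B *m Dl l).
Proof.
move=> dB hl; apply: tinv_uniq.
  by rewrite det_blk det_mulmx dB detDl mul1r -expr2.
rewrite tr_blk mul_blk -expr2 hl trmx_mul trDl -mulmxA (mulmxA _ (tinv B)).
by rewrite tinvP // mul1mx DlK // blk1.
Qed.

Lemma twist_blk e l B : \det B = 1 -> l ^+ 2 = 1 ->
  twist e (blk l (B *m Dl l)) = blk l (twist e B *m Dl l).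
Proof.
move=> dB hl; rewrite /twist tinv_blk // !scale_blk add_blk -mulrDl ppm1 mul1r.
by rewrite mulmxDl !scalemxAl.
Qed.

Lemma tinv_conj l B : \det B = 1 -> l ^+ 2 = 1 ->
  tinv (Dl l *m B *m Dl l) = Dl l *m tinv B *m Dl l.
Proof.
move=> dB hl; apply: tinv_uniq.
  by rewrite !det_mulmx dB detDl mulr1 -expr2.
rewrite !trmx_mul trDl !mulmxA -(mulmxA _ (Dl l) (Dl l)) DlK // mulmx1.
by rewrite -(mulmxA _ _ (tinv B)) tinvP // mulmx1 DlK.
Qed.

Lemma twist_conj e l B : \det B = 1 -> l ^+ 2 = 1 ->
  twist e (Dl l *m B *m Dl l) = Dl l *m twist e B *m Dl l.
Proof.
move=> dB hl; rewrite /twist tinv_conj // mulmxDr mulmxDl.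
by rewrite -!scalemxAr -!scalemxAl.
Qed.

Lemma mul_e1 (A : 'M[R]_3) i j : (A *m @e1 k R) i j = A i 0.
Proof.
rewrite !mxE big_ord_recl big1 ?addr0 => [|m _]; rewrite !mxE /= ?mulr1 ?mulr0 //.
Qed.

Lemma swap_e1 e : swapv e (@e1 k R, @e1 k R) = ((@e1 k R), (@e1 k R)).
Proof. by rewrite /swapv /= -!scalerDl ppm1 addrC ppm1 scale1r. Qed.

Lemma inH_cols (A : 'M[R]_3) e l : inH (A, e, l) ->
  [/\ \det A = 1, e ^+ 2 = 1, l ^+ 2 = 1,
      forall i j : 'I_3, val j = 0%N -> A i j = l * (val i == 0%N)%:R
    & forall i j : 'I_3, val i = 0%N -> A i j = l * (val j == 0%N)%:R].
Proof.
rewrite /inH /inGm /actGm /inSL /inmu2 /= -!scalerDl ppm1 addrC ppm1 scale1r.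
case/andP => /and3P [/eqP dA /eqP he /eqP hl] /eqP [h1 h2].
have c1 : A *m (@e1 k R) = l *: (@e1 k R) by rewrite -{2}h1 scalerA -expr2 hl scale1r.
have c2 : A^T *m (@e1 k R) = l *: (@e1 k R).
  by rewrite -{1}h2 -scalemxAr mulmxA tinvP // mul1mx.
split=> // i j /eqP j0.
  have -> : j = 0 by apply: val_inj; apply/eqP.
  by rewrite -(mul_e1 _ _ 0) c1 !mxE; case: i => [[|m] ?].
have -> : i = 0 by apply: val_inj; apply/eqP.
by move/matrixP: c2 => /(_ j 0); rewrite mul_e1 !mxE; case: j => [[|m] ?].
Qed.

Lemma inH_blk (A : 'M[R]_3) e l : inH (A, e, l) ->
  A = blk l (drsubmx (A : 'M[R]_(1 + 2))).
Proof.
case/inH_cols => _ _ _ hc hr.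
have h1 : ulsubmx (A : 'M[R]_(1 + 2)) = l%:M.
  by apply/matrixP => a b; rewrite !mxE !ord1 hc //= mulr1.
have h2 : ursubmx (A : 'M[R]_(1 + 2)) = 0.
  by apply/matrixP => a b; rewrite !mxE hr ?ord1 //= mulr0.
have h3 : dlsubmx (A : 'M[R]_(1 + 2)) = 0.
  by apply/matrixP => a b; rewrite !mxE hc ?ord1 //= mulr0.
by rewrite /blk -h1 -h2 -h3 submxK.
Qed.

Lemma drsub_blk l M : drsubmx (blk l M : 'M[R]_(1 + 2)) = M.
Proof. by rewrite /blk block_mxKdr. Qed.

Lemma e1_col : (@e1 k R : 'cV[R]_(1 + 2)) = col_mx (1 : 'cV[R]_1) 0.
Proof.
apply/matrixP => i j; rewrite !mxE ord1; case: splitP => a ha; rewrite !mxE.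
  by rewrite ord1 in ha *; have -> : i = 0 by apply: val_inj.
by case: i ha => [[|m] ?] //= _.
Qed.

Lemma blk_e1 l M : blk l M *m @e1 k R = l *: @e1 k R.
Proof.
rewrite /blk e1_col (mul_block_col (l%:M : 'M_1)) !mul0mx mulmx0 !addr0.
by rewrite mul_scalar_mx (scale_col_mx l (1 : 'cV[R]_1) (0 : 'cV[R]_2)) scaler0.
Qed.

Lemma inH_form (A : 'M[R]_3) e l : inH (A, e, l) ->
  exists2 B, A = blk l (B *m Dl l) & [/\ \det B = 1, e ^+ 2 = 1 & l ^+ 2 = 1].
Proof.
move=> hx; have [dA he hl _ _] := inH_cols hx.
have hA := inH_blk hx.
exists (drsubmx (A : 'M[R]_(1 + 2)) *m Dl l).
  by rewrite -mulmxA DlK // mulmx1.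
split=> //; rewrite det_mulmx detDl.
move: dA; rewrite {1}hA det_blk => h.
by rewrite mulrC.
Qed.

Lemma blk_inH B e l : \det B = 1 -> e ^+ 2 = 1 -> l ^+ 2 = 1 ->
  inH (blk l (B *m Dl l), e, l).
Proof.
move=> dB he hl; rewrite /inH /inGm /actGm /inSL /inmu2 /=.
rewrite -!scalerDl ppm1 addrC ppm1 scale1r tinv_blk // !blk_e1 scalerA -expr2 hl.
rewrite scale1r eqxx det_blk det_mulmx dB detDl mul1r -expr2 hl he !eqxx.
by [].
Qed.

Definition phiR (x : 'M[R]_3 * R * R) : 'M[R]_2 * R * R :=
  (drsubmx (x.1.1 : 'M[R]_(1 + 2)) *m Dl x.2, x.1.2, x.2).

Lemma phi_blk B e l : l ^+ 2 = 1 -> phiR (blk l (B *m Dl l), e, l) = (B, e, l).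
Proof. by move=> hl; rewrite /phiR /= drsub_blk -mulmxA DlK // mulmx1. Qed.

Lemma phi_hom x y : inH x -> inH y -> phiR (mulGm x y) = mulK (phiR x) (phiR y).
Proof.
case: x => [[A1 e1'] l1] /inH_form [B1 -> [d1 he1 hl1]].
case: y => [[A2 e2'] l2] /inH_form [B2 -> [d2 he2 hl2]].
rewrite !phi_blk // /mulGm /mulK /= twist_blk // mul_blk /phiR /= drsub_blk.
rewrite twist2E // twist_conj // -!mulmxA DlM //.
Qed.

End Aux.

Lemma map_Dl (k : fieldType) (R S : comAlgType k) (f : {lrmorphism R -> S}) (l : R) :
  map_mx f (Dl l) = Dl (f l).
Proof.
apply/matrixP; move=> [[|[|//]] ?] [[|[|//]] ?]; rewrite !mxE /= ?rmorph0 ?rmorph1 //.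
Qed.

Lemma phi_nat (k : fieldType) (R S : comAlgType k) (f : {lrmorphism R -> S}) x :
  phiR (mapT f x) = mapT f (phiR x).
Proof.
case: x => [[A e] l]; rewrite /phiR /mapT /= map_mxM map_Dl map_drsubmx //.
Qed.

Theorem lemma3p6 (k : fieldType) (hchar : (2%:R : k) != 0)
    (sqrtm1 : k) (hsqrt : sqrtm1 ^+ 2 = -1) :
  exists phi : forall R : comAlgType k, 'M[R]_3 * R * R -> 'M[R]_2 * R * R,
    [/\ (forall (R : comAlgType k) x, inH x -> inK (phi R x)),
        (forall (R : comAlgType k) x y, inH x -> inH y ->
           phi R x = phi R y -> x = y),
        (forall (R : comAlgType k) y, inK y -> exists2 x, inH x & phi R x = y),
        (forall (R : comAlgType k) x y, inH x -> inH y ->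
           phi R (mulGm x y) = mulK (phi R x) (phi R y))
      & (forall (R S : comAlgType k) (f : {lrmorphism R -> S}) x, inH x ->
           phi S (mapT f x) = mapT f (phi R x))].
Proof.
exists (fun R => @phiR k R); split.
- move=> R [[A e] l] /(inH_form hchar) [B -> [dB he hl]].
  by rewrite phi_blk // /inK /inSL /inmu2 /= dB he hl !eqxx.
- move=> R [[A e] l] [[A' e'] l'] /(inH_form hchar) [B -> [dB he hl]].
  move=> /(inH_form hchar) [B' -> [dB' he' hl']].
  by rewrite !phi_blk // => -[-> -> ->].
- move=> R [[B e] l] /and3P [/eqP dB /eqP he /eqP hl].
  by exists (blk l (B *m Dl l), e, l); [exact: blk_inH | rewrite phi_blk].
- by move=> R x y hx hy; apply: phi_hom.
- by move=> R S f x _; apply: phi_nat.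
Qed.
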